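(* Let $w\in S_n$. The destandardization map $\mathrm{dst}$ is well defined on $\mathrm{PD}(w)$ and satisfies: (1) for $P\in\mathrm{PD}(w)$, $\mathrm{dst}(P)\in\mathrm{QPD}(w)$; (2) for $P\in\mathrm{PD}(w)$, $\mathrm{dst}(P)=P$ if and only if $P\in\mathrm{QPD}(w)$; (3) $\mathrm{dst}:\mathrm{PD}(w)\to\mathrm{QPD}(w)$ is surjective; (4) $\mathrm{dst}:\mathrm{PD}(w)\to\mathrm{QPD}(w)$ is injective if and only if $w(i)<w(i+1)$ for all $i$ with $w^{-1}(1)\le i\le n-1$.
   Context: A pipe dream $P$ is a filling of the cells $(i,j)$, $i,j\ge1$ (row $i$ counted from the top, column $j$ from the left), by crossing tiles (crosses) and elbow tiles, with finitely many crosses. Pipes enter at the left edge of each row (pipe $i$ enters row $i$) and exit at the top edge of some column. $P$ is reduced if no two pipes cross more than once. The reduction $\mathtt{reduct}(P)$ is obtained by replacing, for each pair of pipes, all but the southwestmost cross between them by elbows. The permutation of a reduced pipe dream sends $i$ to the column at whose top pipe $i$ exits; the permutation of any $P$ is that of $\mathtt{reduct}(P)$ (equivalently, the Demazure product convention). $\mathrm{PD}(w)$ is the set of pipe dreams with permutation $w$; for $w\in S_n$ all crosses lie in rows $1,\dots,n-1$. The excess $\mathrm{ex}(P)$ is the number of crosses of $P$ minus that of $\mathtt{reduct}(P)$; the weight $\mathrm{wt}(P)$ is the weak composition (of length $n$ for $w\in S_n$) whose $i$th entry is the number of crosses in row $i$. Destandardization $\mathrm{dst}(P)$: while there exists a row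 $i-1$ ($i\ge2$) that contains at least one cross, has no cross in column $1$, and all of whose crosses lie strictly east of every cross in row $i$ (vacuous if row $i$ is empty), move every cross of row $i-1$ one cell southwest (from $(i-1,j)$ to $(i,j-1)$), merging a moved cross with a cross already occupying the target cell. The result when no such row exists is $\mathrm{dst}(P)$. A pipe dream is quasi-Yamanouchi if, in every row containing a cross, the westmost cross of that row either lies in column $1$ or lies weakly west of some cross in the row immediately below. $\mathrm{QPD}(w)$ is the set of quasi-Yamanouchi pipe dreams in $\mathrm{PD}(w)$. *)

(* Defs.v *)
From mathcomp Require Import all_boot all_fingroup.
Set Implicit Arguments. Unset Strict Implicit. Unset Printing Implicit Defensive.

(* A pipe dream: P i j = true iff cell (i,j) (row i from the top, column j
   from the left, both 1-indexed) carries a cross.  Well-formedness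
   (crosses only in cells i,j >= 1, finitely many) is the predicate
   [pd_bounded P N] for some N. *)
Definition pipedream := nat -> nat -> bool.

Definition pd_bounded (P : pipedream) (N : nat) : Prop :=
  forall i j, P i j -> [/\ 1 <= i, 1 <= j, i <= N & j <= N].

(* Reading word: rows top to bottom, each row right to left; the cross at
   (i,j) contributes the letter i+j-1 (simple transposition s_{i+j-1}). *)
Definition rword (P : pipedream) (N : nat) : seq nat :=
  flatten [seq [seq i + j - 1 | j <- [seq j <- rev (iota 1 N) | P i j]]
          | i <- iota 1 N].

(* Permutations of the positive integers as functions nat -> nat. *)
Definition swap_at (a x : nat) : nat :=
  if x == a then a.+1 else if x == a.+1 then a else x.

(* Demazure (0-Hecke) product step: u * s_a if it is length-increasing
   (i.e. u(a) < u(a+1)), else u. *)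
Definition dem_step (u : nat -> nat) (a : nat) : nat -> nat :=
  if u a < u a.+1 then (fun x => u (swap_at a x)) else u.

Definition demazure (s : seq nat) : nat -> nat := foldl dem_step id s.

(* w in S_n viewed as a permutation of {1,2,...} (1-indexed, fixing x > n). *)
Definition permn (n : nat) (w : 'S_n) (x : nat) : nat :=
  match x with
  | 0 => 0
  | x'.+1 => match (insub x' : option 'I_n) with
             | Some i => (w i).+1
             | None => x
             end
  end.

Definition in_PD (n : nat) (w : 'S_n) (P : pipedream) : Prop :=
  exists N, pd_bounded P N /\
    forall x, 1 <= x -> demazure (rword P N) x = permn w x.

Definition quasi_yam (P : pipedream) : Prop :=
  forall i j, P i j -> (forall j', j' < j -> ~~ P i j') ->
    j = 1 \/ exists j', P i.+1 j' /\ j <= j'.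

Definition in_QPD (n : nat) (w : 'S_n) (P : pipedream) : Prop :=
  in_PD w P /\ quasi_yam P.

Definition dst_cond (P : pipedream) (r : nat) : Prop :=
  [/\ exists j, P r j, ~~ P r 1 &
      forall j j', P r j -> P r.+1 j' -> j' < j].

Definition dst_move (P : pipedream) (r : nat) : pipedream :=
  fun i j => if i == r then false
             else if i == r.+1 then P i j || P r j.+1
             else P i j.

Definition dst_step (P Q : pipedream) : Prop :=
  exists r, 1 <= r /\ dst_cond P r /\ Q = dst_move P r.

Inductive dst_steps : pipedream -> pipedream -> Prop :=
| dst_refl P : dst_steps P P
| dst_trans P Q R : dst_step P Q -> dst_steps Q R -> dst_steps P R.

Definition dst_terminal (P : pipedream) : Prop :=
  forall r, 1 <= r -> ~ dst_cond P r.

Definition is_dst (P Q : pipedream) : Prop := dst_steps P Q /\ dst_terminal Q.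

(* Main.v *)
Require Import Defs.
From mathcomp Require Import all_boot all_fingroup.
From mathcomp Require Import zify.
From Stdlib Require Import FunctionalExtensionality Classical.
Set Implicit Arguments. Unset Strict Implicit. Unset Printing Implicit Defensive.


Lemma swap_atK a x : swap_at a (swap_at a x) = x.
Proof.
rewrite /swap_at; case: (x =P a) => [->|h1].
  rewrite eqxx; case: eqP => //; lia.
case: (x =P a.+1) => [->|h2]; first by rewrite eqxx.
move/eqP/negbTE: (h1) => ->; move/eqP/negbTE: (h2) => ->; done.
Qed.

Lemma swap_at_inj a : injective (swap_at a).
Proof. exact: (can_inj (swap_atK a)). Qed.

Lemma dem_step_inj u a : injective u -> injective (dem_step u a).
Proof.
rewrite /dem_step; case: ifP => // _ iu x y /iu; exact: swap_at_inj.
Qed.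

Lemma swap_at_a a : swap_at a a = a.+1.
Proof. by rewrite /swap_at eqxx. Qed.
Lemma swap_at_a1 a : swap_at a a.+1 = a.
Proof. rewrite /swap_at; case: eqP => ?; [lia|by rewrite eqxx]. Qed.
Lemma swap_at_other a x : x != a -> x != a.+1 -> swap_at a x = x.
Proof. by rewrite /swap_at => /negbTE -> /negbTE ->. Qed.

Lemma dem_step_idem u a : dem_step (dem_step u a) a = dem_step u a.
Proof.
have E : dem_step u a = (if u a < u a.+1 then (fun x => u (swap_at a x)) else u) by [].
case h: (u a < u a.+1); rewrite E h.
  by rewrite /dem_step swap_at_a swap_at_a1 ltnNge ltnW.
by rewrite /dem_step h.
Qed.

Lemma foldl_inj s u : injective u -> injective (foldl dem_step u s).
Proof.
elim: s u => //= a s IH u iu; apply: IH; exact: dem_step_inj.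
Qed.

Lemma dem_step_desc u a : injective u -> dem_step u a a.+1 < dem_step u a a.
Proof.
move=> iu; rewrite /dem_step; case: ifP => h.
  by rewrite swap_at_a swap_at_a1.
rewrite ltn_neqAle eq_sym (inj_eq iu); apply/andP; split; first lia.
by rewrite leqNgt h.
Qed.

Lemma dem_step_track u a x :
  dem_step u a (if u a < u a.+1 then swap_at a x else x) = u x.
Proof. rewrite /dem_step; case: ifP => _ //; by rewrite swap_atK. Qed.

Lemma dem_step_fix u a x : x != a -> x != a.+1 -> dem_step u a x = u x.
Proof. move=> h1 h2; rewrite /dem_step; case: ifP => _ //; by rewrite swap_at_other. Qed.

Definition rowl (P : pipedream) N i :=
  [seq i + j - 1 | j <- [seq j <- rev (iota 1 N) | P i j]].

Lemma rwordE P N : rword P N = flatten (map (rowl P N) (iota 1 N)).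
Proof. by []. Qed.

Definition gtr : rel nat := fun a b => b < a.

Lemma rowl_letters P N i : 1 <= i ->
  rowl P N i = [seq a <- rev (iota i N) | P i (a + 1 - i)].
Proof.
move=> hi.
have E : rev (iota i N) = map (fun j => i + j - 1) (rev (iota 1 N)).
  rewrite map_rev; congr rev.
  rewrite -{1}(subnK hi) iotaDl; apply/eq_in_map => j; rewrite mem_iota; lia.
rewrite E filter_map /rowl; congr map; apply: eq_in_filter => j.
rewrite mem_rev mem_iota => hj /=. congr (P i); lia.
Qed.

Lemma rowl_ge P N i x : x \in rowl P N i -> i <= x.
Proof.
rewrite /rowl => /mapP [j]; rewrite mem_filter mem_rev mem_iota => /andP[_ h] ->; lia.
Qed.

Lemma rowl_sorted P N i : 1 <= i -> sorted gtr (rowl P N i).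
Proof.
move=> hi; rewrite rowl_letters //; apply: sorted_filter.
  move=> a b c /=; rewrite /gtr; lia.
rewrite rev_sorted; exact: iota_ltn_sorted.
Qed.

Lemma rowl_empty P N i : (forall j, ~~ P i j) -> rowl P N i = [::].
Proof.
move=> h; rewrite /rowl; suff -> : [seq j <- rev (iota 1 N) | P i j] = [::] by [].
apply/eqP; rewrite -[_ == _]negbK -has_filter; apply/hasP => -[j _]; by rewrite (negbTE (h j)).
Qed.

Lemma rowl_mono P N M i : pd_bounded P N -> N <= M -> rowl P M i = rowl P N i.
Proof.
move=> hb hNM; rewrite /rowl; congr map.
have -> : M = N + (M - N) by lia.
rewrite iotaD rev_cat filter_cat.
suff -> : [seq j <- rev (iota (1 + N) (M - N)) | P i j] = [::] by [].
apply/eqP; rewrite -[_ == _]negbK -has_filter; apply/hasP => -[j].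
rewrite mem_rev mem_iota => hj /hb [] _ _ _; lia.
Qed.

Lemma flatten_nil_map (T : Type) (f : nat -> seq T) s :
  (forall x, x \in s -> f x = [::]) -> flatten (map f s) = [::].
Proof.
elim: s => //= a s IH h; rewrite h ?mem_head // IH // => x hx; apply: h.
by rewrite in_cons hx orbT.
Qed.

Lemma rword_mono P N M : pd_bounded P N -> N <= M -> rword P M = rword P N.
Proof.
move=> hb hNM; rewrite !rwordE.
have -> : M = N + (M - N) by lia.
rewrite iotaD map_cat flatten_cat.
rewrite [flatten (map _ (iota (1 + N) _))](_ : _ = [::]); last first.
  apply: flatten_nil_map => i; rewrite mem_iota => /andP[hi1 hi2].
  apply: rowl_empty => j; apply/negP => /hb [] h1 h2 h3 h4; lia.
rewrite cats0; congr flatten; apply: eq_map => i; apply: rowl_mono => //; lia.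
Qed.

Lemma above_track l u x : all (fun a => x < a) l -> foldl dem_step u l x = u x.
Proof.
elim: l u => //= a l IH u /andP[h1 h2]; rewrite IH // dem_step_fix //; apply/eqP; lia.
Qed.

Lemma swap_at_pos a x : 1 <= a -> 1 <= x -> 1 <= swap_at a x.
Proof. rewrite /swap_at; case: ifP => _ //; case: ifP => //. Qed.

Lemma row_track i l : sorted gtr l -> all (fun a => i <= a) l ->
  forall u x, 1 <= x <= i -> u x = 1 ->
  exists x', 1 <= x' <= i.+1 /\ foldl dem_step u l x' = 1.
Proof.
elim: l => [|a l IH] /= hs ha u x hx hux.
  exists x; split => //; lia.
move/andP: ha => [hai hal].
have hsl : sorted gtr l := path_sorted hs.
have hlt : all (fun b => b < a) l.
  have tr : transitive gtr by move=> p q r; rewrite /gtr; lia.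
  exact: (order_path_min tr hs).
have h1 := dem_step_track u a x; rewrite hux in h1.
move: h1; set x1 := (if _ then _ else _) => h1.
have [hx1|hx1] := leqP x1 i.
  apply: (IH hsl hal _ x1) => //; apply/andP; split => //.
  rewrite /x1; case: ifP => _; last lia.
  apply: swap_at_pos; lia.
have hxa : x = a.
  move: hx1; rewrite /x1; case: ifP => _; last lia.
  rewrite /swap_at; case: ifP => /eqP; first by [].
  case: ifP => /eqP; lia.
subst x.
case: l IH hs hal hlt hsl => [|b l] IH hs hal hlt hsl.
  exists x1; split => //; move: hx1; rewrite /x1; case: ifP => _; rewrite ?swap_at_a; lia.
move: hal hlt => /= /andP[hb _] /andP[hb' _]; lia.
Qed.

Lemma permn_S n (w : 'S_n) x : x < n -> exists i : 'I_n, val i = x /\ permn w x.+1 = (w i).+1.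
Proof.
move=> hx; rewrite /permn; case: insubP => [i _ <-|]; first by exists i.
by rewrite /= hx.
Qed.

Section Permn.
Variables (n : nat) (w : 'S_n).

Lemma permn0 : permn w 0 = 0. Proof. by []. Qed.

Lemma permn_fix x : n < x -> permn w x = x.
Proof.
case: x => //= x hx; case: insubP => [i hi _|//]; move: hi => /=; lia.
Qed.

Lemma permn_range x : 1 <= x <= n -> 1 <= permn w x <= n.
Proof.
case: x => //= x hx; case: insubP => [i _ _|]; first by have := ltn_ord (w i); lia.
move=> /=; lia.
Qed.


Lemma permnK x : 1 <= x -> permn (w^-1)%g (permn w x) = x.
Proof.
case: x => // x _; have [hx|hx] := ltnP x n.
  have [i [<- ->]] := permn_S w hx.
  have [j [hj ->]] := permn_S (w^-1)%g (ltn_ord (w i)).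
  have -> : j = w i by apply: val_inj.
  by rewrite permK.
rewrite permn_fix ?ltnS //= ; case: insubP => [i /= hi _|] //; lia.
Qed.

Lemma permn_pos x : 1 <= x -> 1 <= permn w x.
Proof.
move=> hx; have [h|h] := leqP x n; first by have := permn_range (x:=x); lia.
by rewrite permn_fix.
Qed.

Lemma permn_inj : injective (permn w).
Proof.
move=> x y; case: x => [|x]; case: y => [|y] //.
- move=> h; have := permn_pos (x:=y.+1); rewrite -h /=; lia.
- move=> h; have := permn_pos (x:=x.+1); rewrite h /=; lia.
move=> h; by rewrite -(permnK (x:=x.+1)) // h permnK.
Qed.
End Permn.

Lemma permn_surj n (w : 'S_n) y : 1 <= y -> exists x, 1 <= x /\ permn w x = y.
Proof.
move=> hy; exists (permn (w^-1)%g y); split; first exact: permn_pos.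
by have := @permnK _ (w^-1)%g y hy; rewrite invgK.
Qed.

Lemma iota1S m : iota 1 m.+1 = iota 1 m ++ [:: m.+1].
Proof. by rewrite -[m.+1]addn1 iotaD /= add1n addn1. Qed.

Lemma gap_track P N r : 1 <= r -> (forall j, ~~ P r j) ->
  exists x, 1 <= x <= r /\ demazure (rword P N) x = 1.
Proof.
move=> hr hrow.
suff H : forall m, exists x, [/\ 1 <= x <= m.+1, (r <= m -> x <= r) &
   foldl dem_step id (flatten (map (rowl P N) (iota 1 m))) x = 1].
  have [x [h1 h2 h3]] := H N; exists x; split => //.
  have [hrN|hrN] := leqP r N; first by rewrite (h2 hrN); lia.
  lia.
elim => [|m [x [h1 h2 h3]]]; first by exists 1.
rewrite iota1S map_cat flatten_cat foldl_cat /= cats0.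
have hge : all (fun a => m.+1 <= a) (rowl P N m.+1).
  by apply/allP => a /rowl_ge.
have [hm|hm] := ltnP m.+1 r.
  have [x' [hx' hf]] := row_track (rowl_sorted P N (ltn0Sn m)) hge h1 h3.
  exists x'; split => //; lia.
have [hm'|hm'] := eqVneq m.+1 r.
  subst r; rewrite rowl_empty //; exists x; split => //; lia.
exists x; split; [lia|lia|].
rewrite above_track //; apply/allP => a /rowl_ge; lia.
Qed.

Lemma gap_last P N r : pd_bounded P N -> (exists j, P r.+1 j) ->
  exists s a, rword P N = rcons s a /\ r.+1 <= a.
Proof.
move=> hb [j hj]; have [_ hj1 hrN hjN] := hb _ _ hj.
rewrite rwordE.
have -> : N = r + (N - r) by lia.
rewrite iotaD map_cat flatten_cat.
set B := flatten (map _ (iota (1 + r) _)).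
have hB : forall a, a \in B -> r.+1 <= a.
  move=> a /flatten_mapP [i]; rewrite mem_iota => /andP[hi _] /rowl_ge; lia.
have hBn : B != [::].
  rewrite /B; have -> : N - r = 1 + (N - r.+1) by lia.
  rewrite iotaD /=.
  suff : rowl P (r + (1 + (N - r.+1))) (1 + r) != [::].
    by case: (rowl _ _ _).
  apply/eqP => E.
  have : r + j \in rowl P (r + (1 + (N - r.+1))) (1 + r).
    rewrite /rowl add1n; apply/mapP; exists j; last lia.
    rewrite mem_filter hj mem_rev mem_iota /=; lia.
  by rewrite E.
case/lastP: B hB hBn => [|B' a] hB // _.
exists (flatten (map (rowl P (r + (N - r))) (iota 1 r)) ++ B'), a; split.
  by rewrite rcons_cat.
apply: hB; by rewrite mem_rcons mem_head.
Qed.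

Lemma permn_le_self n (w : 'S_n) x : n <= x -> permn w x <= x.
Proof.
move=> h; have [h'|h'] := eqVneq x n.
  subst x; case: n w h => [|n] w h //; have := @permn_range _ w n.+1; lia.
by rewrite permn_fix //; lia.
Qed.

Lemma gap n (w : 'S_n) P r : in_PD w P -> 1 <= r -> (forall j, ~~ P r j) ->
  (exists j, P r.+1 j) ->
  exists i, [/\ permn (w^-1)%g 1 <= i, i <= n.-1 & permn w i.+1 < permn w i].
Proof.
move=> [N [hb hd]] hr hrow hnext.
have [x [hx hx1]] := gap_track N hr hrow.
have hw1 : permn (w^-1)%g 1 = x.
  by rewrite -hx1 hd ?permnK //; lia.
have [s [a [hs ha]]] := gap_last hb hnext.
have hda : demazure (rword P N) a.+1 < demazure (rword P N) a.
  rewrite hs /demazure foldl_rcons; apply: dem_step_desc; exact: foldl_inj.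
rewrite !hd in hda; try lia.
exists a; split => //; first lia.
rewrite leqNgt; apply/negP => han.
have := @permn_le_self _ w a; rewrite permn_fix in hda; lia.
Qed.

Lemma filter_nil_in (s : seq nat) (p : pred nat) :
  (forall x, x \in s -> ~~ p x) -> filter p s = [::].
Proof.
elim: s => //= a s IH h; rewrite (negbTE (h a (mem_head _ _))) IH // => x hx.
by apply: h; rewrite in_cons hx orbT.
Qed.

Lemma merge_fold (T : seq nat) (p q : pred nat) u : sorted gtr T ->
  (forall a b, a \in T -> b \in T -> p a -> q b -> b <= a) ->
  foldl dem_step u (filter p T ++ filter q T) =
  foldl dem_step u (filter (fun a => p a || q a) T).
Proof.
elim: T u => //= x T IH u hs hpq.
have hsT : sorted gtr T := path_sorted hs.
have tr : transitive gtr by move=> a b c; rewrite /gtr; lia.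
have hlt : all (fun b => b < x) T := order_path_min tr hs.
have hpqT : forall a b, a \in T -> b \in T -> p a -> q b -> b <= a.
  by move=> a b ha hb; apply: hpq; rewrite in_cons ?ha ?hb orbT.
case hp: (p x); case hq: (q x) => /=.
- have hnp : forall y, y \in T -> ~~ p y.
    move=> y hy; apply/negP => py.
    have := hpq y x; rewrite in_cons hy orbT mem_head => /(_ isT isT py hq).
    move/allP: hlt => /(_ y hy); lia.
  rewrite filter_nil_in //= dem_step_idem; congr foldl; apply: eq_in_filter => y hy.
  by rewrite (negbTE (hnp y hy)).
- by rewrite IH.
- have hnp : forall y, y \in T -> ~~ p y.
    move=> y hy; apply/negP => py.
    have := hpq y x; rewrite in_cons hy orbT mem_head => /(_ isT isT py hq).
    move/allP: hlt => /(_ y hy); lia.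
  rewrite filter_nil_in //=; congr foldl; apply: eq_in_filter => y hy.
  by rewrite (negbTE (hnp y hy)).
- by rewrite IH.
Qed.

Lemma rowl_ext P Q N i : (forall j, P i j = Q i j) -> rowl P N i = rowl Q N i.
Proof. by move=> h; rewrite /rowl; congr map; apply: eq_filter => j; rewrite h. Qed.

Lemma move_other P r i j : i != r -> i != r.+1 -> dst_move P r i j = P i j.
Proof. by rewrite /dst_move => /negbTE -> /negbTE ->. Qed.

Lemma move_r P r j : dst_move P r r j = false.
Proof. by rewrite /dst_move eqxx. Qed.

Lemma move_r1 P r j : dst_move P r r.+1 j = P r.+1 j || P r j.+1.
Proof. by rewrite /dst_move eqxx; case: eqP => //; lia. Qed.

Lemma move_bounded P N r : pd_bounded P N -> dst_cond P r ->
  pd_bounded (dst_move P r) N.+1.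
Proof.
move=> hb [[j0 hj0] h1 _] i j.
have [_ _ hrN _] := hb _ _ hj0.
have [->|hir] := eqVneq i r; first by rewrite move_r.
have [->|hir1] := eqVneq i r.+1.
  rewrite move_r1 => /orP[/hb [] *|h]; first (split; lia).
  have [_ hj hr hjN] := hb _ _ h; split; try lia.
  have : j.+1 != 1 by apply: contraNneq h1 => <-.
  lia.
rewrite move_other // => /hb [] *; split; lia.
Qed.

Lemma mid_rows P N M r u : pd_bounded P N -> N < M -> 1 <= r -> dst_cond P r ->
  foldl dem_step u (rowl (dst_move P r) M r ++ rowl (dst_move P r) M r.+1) =
  foldl dem_step u (rowl P M r ++ rowl P M r.+1).
Proof.
move=> hb hM hr [_ h1 h3].
set Q := dst_move P r.
rewrite rowl_empty /=; last by move=> j; rewrite /Q move_r.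
set T := rev (iota r M.+1).
have RP1 : rowl P M r = filter (fun a => P r (a + 1 - r)) T.
  rewrite rowl_letters // /T -[M.+1]addn1 iotaD rev_cat /=.
  case: ifP => // /hb [] ha hb1 hc hd; lia.
have RP2 : rowl P M r.+1 = filter (fun a => P r.+1 (a + 1 - r.+1)) T.
  rewrite rowl_letters // /T -[M.+1]add1n iotaD rev_cat filter_cat /= addn1.
  case: ifP => [/hb [] ha hb1 hc hd|_]; first lia; by rewrite cats0.
have RQ2 : rowl Q M r.+1 = filter (fun a => P r (a + 1 - r) || P r.+1 (a + 1 - r.+1)) T.
  rewrite rowl_letters // /T -[M.+1]add1n iotaD rev_cat filter_cat /= addn1.
  rewrite subSnn subnn.
  case: ifP => [/orP[h|/hb [] ha hb1 hc hd]|_]; last 1 first.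
  - rewrite cats0; apply: eq_in_filter => a; rewrite mem_rev mem_iota => /andP[ha _].
    rewrite /Q move_r1 orbC; congr (_ || _); congr (P _); lia.
  - by rewrite h in h1.
  - lia.
rewrite RP1 RP2 RQ2 merge_fold //.
  rewrite /T rev_sorted; exact: iota_ltn_sorted.
move=> a b; rewrite /T !mem_rev !mem_iota => /andP[ha _] /andP[hb' _] pa qb.
have := h3 _ _ pa qb; lia.
Qed.

Lemma step_rword P N r : pd_bounded P N -> 1 <= r -> dst_cond P r ->
  demazure (rword (dst_move P r) N.+1) = demazure (rword P N).
Proof.
move=> hb hr hc; have [[j0 hj0] h1 h3] := hc.
have [_ _ hrN _] := hb _ _ hj0.
set Q := dst_move P r.
rewrite -(rword_mono (M := N.+1) hb) // !rwordE.
have hM : N < N.+1 by [].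
move: hM; set M := N.+1 => hM.
have -> : M = r.-1 + (2 + (M - r.+1)) by rewrite /M; lia.
rewrite !iotaD !map_cat !flatten_cat.
have -> : 1 + r.-1 = r by lia.
have E1 : flatten (map (rowl Q (r.-1 + (2 + (M - r.+1)))) (iota 1 r.-1)) =
          flatten (map (rowl P (r.-1 + (2 + (M - r.+1)))) (iota 1 r.-1)).
  congr flatten; apply/eq_in_map => i; rewrite mem_iota => hi.
  apply: rowl_ext => j; rewrite /Q move_other //; apply/eqP; lia.
have E3 : flatten (map (rowl Q (r.-1 + (2 + (M - r.+1)))) (iota (r + 2) (M - r.+1))) =
          flatten (map (rowl P (r.-1 + (2 + (M - r.+1)))) (iota (r + 2) (M - r.+1))).
  congr flatten; apply/eq_in_map => i; rewrite mem_iota => hi.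
  apply: rowl_ext => j; rewrite /Q move_other //; apply/eqP; lia.
rewrite E1 E3 /demazure !foldl_cat; congr foldl.
rewrite /= -[LHS]foldl_cat -[RHS]foldl_cat; apply: (mid_rows (N := N)) => //.
rewrite /M; lia.
Qed.

Lemma step_PD n (w : 'S_n) P r : in_PD w P -> 1 <= r -> dst_cond P r ->
  in_PD w (dst_move P r).
Proof.
move=> [N [hb hd]] hr hc; exists N.+1; split; first exact: move_bounded.
by rewrite step_rword.
Qed.

Lemma PD_bounded_any n (w : 'S_n) P N : pd_bounded P N -> in_PD w P ->
  forall x, 1 <= x -> demazure (rword P N) x = permn w x.
Proof.
move=> hb [N' [hb' hd]] x hx.
rewrite -(rword_mono (M := maxn N N') hb) ?leq_maxl //.
by rewrite (rword_mono hb') ?leq_maxr // hd.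
Qed.

Lemma step_PD_back n (w : 'S_n) P r N : pd_bounded P N -> 1 <= r -> dst_cond P r ->
  in_PD w (dst_move P r) -> in_PD w P.
Proof.
move=> hb hr hc hQ; exists N; split => // x hx.
by rewrite -(step_rword hb hr hc) (PD_bounded_any (move_bounded hb hc) hQ).
Qed.

Lemma qy_term P N : pd_bounded P N -> quasi_yam P -> dst_terminal P.
Proof.
move=> hb hq r hr [[j0 hj0] h1 h3].
have [j hj hmin] := ex_minnP (@ex_intro _ (fun j => P r j) j0 hj0).
have := hq r j hj => /(_ _) [].
- move=> j' hj'; apply/negP => /hmin; lia.
- by move=> E; rewrite E in hj; rewrite hj in h1.
- move=> [j' [hj' hjj']]; have := h3 _ _ hj hj'; lia.
Qed.

Lemma term_qy P N : pd_bounded P N -> dst_terminal P -> quasi_yam P.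
Proof.
move=> hb ht i j hij hmin.
have [hi hj _ _] := hb _ _ hij.
case: (eqVneq j 1) => [->|hj1]; first by left.
right; apply: NNPP => hno; apply: (ht i hi); split.
- by exists j.
- apply/negP => h; have := hmin 1; rewrite h; move/(_ _)/negP; apply; lia.
- move=> j1 j2 h1 h2.
  have hjj1 : j <= j1.
    rewrite leqNgt; apply/negP => hlt; have := hmin _ hlt; by rewrite h1.
  rewrite ltnNge; apply/negP => hle; apply: hno; exists j2; split => //; lia.
Qed.


Definition box K (P : pipedream) :=
  forall i j, P i j -> [/\ 1 <= i, 1 <= j & i + j <= K].

Lemma box_move K P r : box K P -> dst_cond P r -> box K (dst_move P r).
Proof.
move=> hb [_ h1 _] i j.
have [->|hir] := eqVneq i r; first by rewrite move_r.
have [->|hir1] := eqVneq i r.+1.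
  rewrite move_r1 => /orP[/hb //|h].
  have [hr hj hs] := hb _ _ h; split; try lia.
  have : j.+1 != 1 by apply: contraNneq h1 => <-.
  lia.
by rewrite move_other // => /hb.
Qed.

Definition rsum K (P : pipedream) i := \sum_(0 <= j < K) P i j * j.
Definition wt K (P : pipedream) := \sum_(0 <= i < K) rsum K P i.

Lemma sum_lt2 K r (F G : nat -> nat) : r.+1 < K ->
  (forall i, i < K -> i != r -> i != r.+1 -> F i = G i) ->
  F r + F r.+1 < G r + G r.+1 ->
  \sum_(0 <= i < K) F i < \sum_(0 <= i < K) G i.
Proof.
move=> hK hFG hlt.
have sp : forall H : nat -> nat, \sum_(0 <= i < K) H i =
    \sum_(0 <= i < r) H i + (H r + H r.+1) + \sum_(r.+2 <= i < K) H i.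
  move=> H; have h1 : 0 <= r by [].
  have h2 : r <= K by lia.
  rewrite (@big_cat_nat _ _ _ r 0 K) //=.
  have h3 : r <= r.+2 by lia.
  have h4 : r.+2 <= K by lia.
  rewrite (@big_cat_nat _ _ _ r.+2 r K) //= addnA; congr (_ + _ + _).
  rewrite big_ltn // big_nat1 //.
rewrite !sp.
have E1 : \sum_(0 <= i < r) F i = \sum_(0 <= i < r) G i.
  apply: eq_big_nat => i hi; apply: hFG; try apply/eqP; lia.
have E2 : \sum_(r.+2 <= i < K) F i = \sum_(r.+2 <= i < K) G i.
  apply: eq_big_nat => i hi; apply: hFG; try apply/eqP; lia.
rewrite E1 E2; lia.
Qed.

Lemma wt_move K P r : box K P -> 1 <= r -> dst_cond P r ->
  wt K (dst_move P r) < wt K P.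
Proof.
move=> hb hr hc; have [[j0 hj0] h1 _] := hc.
have [_ hj0' hrj0] := hb _ _ hj0.
have hj02 : 2 <= j0.
  case: (ltnP j0 2) => // h; have E : j0 = 1 by lia.
  by rewrite E in hj0; rewrite hj0 in h1.
case: K hb hrj0 => [|K] hb hrj0; first lia.
rewrite /wt; apply: (sum_lt2 (r := r)); first lia.
  move=> i _ h1' h2'; apply: eq_big_nat => j _; by rewrite move_other.
set S := \sum_(0 <= j < K) P r j.+1 * j.
have HGr : rsum K.+1 P r = S + \sum_(0 <= j < K) P r j.+1.
  rewrite /rsum big_nat_recl // muln0 add0n /S -big_split /=.
  apply: eq_big_nat => j _; rewrite mulnS; lia.
have Hpos : 0 < \sum_(0 <= j < K) P r j.+1.
  rewrite (bigD1_seq j0.-1) /= ?mem_index_iota ?iota_uniq //; last lia.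
  rewrite prednK; last lia. by rewrite hj0.
have HFr : rsum K.+1 (dst_move P r) r = 0.
  by rewrite /rsum big1 // => j _; rewrite move_r.
have HFr1 : rsum K.+1 (dst_move P r) r.+1 <= rsum K.+1 P r.+1 + S.
  have HS : S = \sum_(0 <= j < K.+1) P r j.+1 * j.
    rewrite /S big_nat_recr //=.
    case: (boolP (P r K.+1)) => [/hb [] ha hb1 hc2|_]; first lia.
    by rewrite addn0.
  rewrite HS /rsum -big_split /=; apply: leq_sum => j _.
  rewrite move_r1; case: (P r.+1 j); case: (P r j.+1) => /=; lia.
rewrite HFr HGr; lia.
Qed.

Lemma acc_box K P : box K P -> Acc (fun Q R => dst_step R Q) P.
Proof.
move=> hb0; suff H : forall m P, box K P -> wt K P < m -> Acc (fun Q R => dst_step R Q) P.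
  exact: (H (wt K P).+1 P hb0).
clear P hb0; elim => [//|m IH] P hb hm; constructor => Q [r [hr [hc ->]]].
apply: IH; first exact: box_move.
have := wt_move hb hr hc; lia.
Qed.

Definition NZ (P : pipedream) := forall i, ~~ P i 0.

Lemma nz_move P r : NZ P -> dst_cond P r -> NZ (dst_move P r).
Proof.
move=> hz [_ h1 _] i.
have [->|hir] := eqVneq i r; first by rewrite move_r.
have [->|hir1] := eqVneq i r.+1; first by rewrite move_r1 (negbTE (hz _)) (negbTE h1).
by rewrite move_other.
Qed.

Lemma cond_ext P Q s : (forall j, P s j = Q s j) -> (forall j, P s.+1 j = Q s.+1 j) ->
  dst_cond P s -> dst_cond Q s.
Proof.
move=> e1 e2 [[j hj] h1 h3]; split.
- by exists j; rewrite -e1.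
- by rewrite -e1.
- by move=> j0 j' ; rewrite -e1 -e2; apply: h3.
Qed.

Ltac neq := apply/eqP; lia.

Lemma move_comm P r s : r.+1 < s ->
  dst_move (dst_move P r) s = dst_move (dst_move P s) r.
Proof.
move=> h; apply: functional_extensionality => i; apply: functional_extensionality => j.
have [->|h1] := eqVneq i s.
  rewrite move_r move_other ?move_r //; neq.
have [->|h2] := eqVneq i s.+1.
  rewrite move_r1 !(@move_other _ r); try neq.
  by rewrite move_r1.
have [->|h3] := eqVneq i r.
  rewrite move_r move_other ?move_r //; neq.
have [->|h4] := eqVneq i r.+1.
  rewrite move_other; try neq.
  rewrite !move_r1 !(@move_other _ s) //; neq.
by rewrite !move_other.
Qed.

Lemma conf_far P r s : 1 <= r -> 1 <= s -> r.+1 < s -> dst_cond P r -> dst_cond P s ->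
  dst_step (dst_move P r) (dst_move (dst_move P r) s) /\
  dst_step (dst_move P s) (dst_move (dst_move P r) s).
Proof.
move=> hr hs h cr cs; split.
  exists s; split => //; split => //.
  apply: (cond_ext _ _ cs) => j; rewrite move_other //; neq.
exists r; split => //; split; last exact: move_comm.
apply: (cond_ext _ _ cr) => j; rewrite move_other //; neq.
Qed.

Lemma conf_adj P r : NZ P -> 1 <= r -> dst_cond P r -> dst_cond P r.+1 ->
  dst_step (dst_move P r) (dst_move (dst_move P r) r.+1) /\
  dst_steps (dst_move P r.+1) (dst_move (dst_move P r) r.+1).
Proof.
move=> hz hr [[ja ha] hA1 hAB] [[jb hb] hB1 hBC].
have hjb1 : 1 < jb.
  have := hz r.+1; case: jb hb {hBC hAB} => [->//|[|jb]] //; by rewrite (negbTE hB1).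
have hA2 : ~~ P r 2.
  apply/negP => h2; have := hAB _ _ h2 hb; lia.
have hja : 0 < ja by case: ja ha => //; rewrite (negbTE (hz r)).
split.
  exists r.+1; split => //; split => //; split.
  - by exists jb; rewrite move_r1 hb.
  - by rewrite move_r1 (negbTE hB1) (negbTE hA2).
  - move=> j j'; rewrite move_r1 move_other; try neq.
    move=> /orP[hj|hj] hj'; first exact: hBC.
    have := hAB _ _ hj hb; have := hBC _ _ hb hj'; lia.
apply: (@dst_trans _ (dst_move (dst_move P r.+1) r)).
  exists r; split => //; split => //; split.
  - by exists ja; rewrite move_other //; neq.
  - by rewrite move_other //; neq.
  - by move=> j j' _; rewrite move_r.
apply: (@dst_trans _ (dst_move (dst_move (dst_move P r.+1) r) r.+1)); last first.
  have -> : dst_move (dst_move (dst_move P r.+1) r) r.+1 = dst_move (dst_move P r) r.+1.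
    apply: functional_extensionality => i; apply: functional_extensionality => j.
    have [->|h1] := eqVneq i r.+1; first by rewrite !move_r.
    have [->|h2] := eqVneq i r.+2.
      rewrite !move_r1 move_other; try neq.
      rewrite move_r1 move_r (@move_other _ r.+1 r); try neq.
      rewrite (@move_other _ r r.+2); try neq.
    have [->|h3] := eqVneq i r; first by rewrite !(@move_other _ r.+1 r) ?move_r; try neq.
    by rewrite !move_other.
  exact: dst_refl.
exists r.+1; split => //; split => //; split.
- exists ja.-1; rewrite move_r1 move_r prednK //.
  rewrite move_other //; neq.
- rewrite move_r1 move_r /= move_other //; neq.
- move=> j j'; rewrite move_r1 move_r /= move_other; try neq.
  rewrite move_other; try neq.
  rewrite move_r1 => hj /orP[hj'|hj'].
    have := hAB _ _ hj hb; have := hBC _ _ hb hj'; lia.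
  have := hAB _ _ hj hj'; lia.
Qed.


Definition Rel := fun Q R => dst_step R Q.

Lemma steps_trans P Q R : dst_steps P Q -> dst_steps Q R -> dst_steps P R.
Proof. elim=> //= P0 Q0 R0 h _ IH hR; exact: (dst_trans h (IH hR)). Qed.

Lemma step_steps P Q : dst_step P Q -> dst_steps P Q.
Proof. move=> h; exact: (dst_trans h (dst_refl _)). Qed.

Lemma acc_steps P Q : Acc Rel P -> dst_steps P Q -> Acc Rel Q.
Proof. move=> hA h; elim: h hA => [P0 hA|P0 Q0 R0 h _ IH hA]; first exact: hA.
apply: IH; exact: (@Acc_inv _ Rel P0 hA Q0 h). Qed.

Lemma nz_steps P Q : NZ P -> dst_steps P Q -> NZ Q.
Proof.
move=> hz h; elim: h hz => // P0 Q0 R0 [r [_ [hc ->]]] _ IH hz; apply: IH; exact: nz_move.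
Qed.

Lemma exists_nf P : Acc Rel P -> exists Q, is_dst P Q.
Proof.
elim=> {}P _ IH.
case: (classic (dst_terminal P)) => ht; first by exists P; split => //; exact: dst_refl.
have [r hr] : exists r, ~ (1 <= r -> ~ dst_cond P r) by apply: not_all_ex_not.
have hr1 : 1 <= r by apply: NNPP => h; apply: hr => /h.
have hc : dst_cond P r by apply: NNPP => h; apply: hr.
have hs : dst_step P (dst_move P r) by exists r.
have [Q [hQ hQt]] := IH _ hs; exists Q; split => //; exact: dst_trans hs hQ.
Qed.

Lemma term_nostep P Q : dst_terminal P -> dst_step P Q -> False.
Proof. by move=> ht [r [hr [hc _]]]; exact: ht r hr hc. Qed.

Lemma local_conf P Q1 Q2 : NZ P -> dst_step P Q1 -> dst_step P Q2 ->
  exists S, dst_steps Q1 S /\ dst_steps Q2 S.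
Proof.
move=> hz [r [hr [cr ->]]] [s [hs [cs ->]]].
have [->|hrs] := eqVneq r s; first by exists (dst_move P s); split; exact: dst_refl.
have [e|e1] := eqVneq s r.+1.
  subst s; have [h1 h2] := conf_adj hz hr cr cs.
  by exists (dst_move (dst_move P r) r.+1); split => //; exact: step_steps.
have [e|e2] := eqVneq r s.+1.
  subst r; have [h1 h2] := conf_adj hz hs cs cr.
  by exists (dst_move (dst_move P s) s.+1); split => //; exact: step_steps.
have [hlt|hlt] := ltnP r s.
  have h' : r.+1 < s by lia.
  have [h1 h2] := conf_far hr hs h' cr cs.
  by exists (dst_move (dst_move P r) s); split; exact: step_steps.
have h' : s.+1 < r by lia.
have [h1 h2] := conf_far hs hr h' cs cr.
by exists (dst_move (dst_move P s) r); split; exact: step_steps.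
Qed.

Lemma steps_cases P Q : dst_steps P Q -> P = Q \/ exists P1, dst_step P P1 /\ dst_steps P1 Q.
Proof. case=> [P0|P0 P1 Q0 h1 h2]; [by left|right; by exists P1]. Qed.

Lemma unique_nf P : Acc Rel P -> NZ P ->
  forall Q1 Q2, is_dst P Q1 -> is_dst P Q2 -> Q1 = Q2.
Proof.
elim=> {}P hA IH hz Q1 Q2 [h1 t1] [h2 t2].
case: (steps_cases h1) => [e1|[P1 [s1 ss1]]].
  subst Q1; case: (steps_cases h2) => [//|[P2 [s2 _]]].
  by case: (term_nostep t1 s2).
case: (steps_cases h2) => [e2|[P2 [s2 ss2]]].
  subst Q2; by case: (term_nostep t2 s1).
have [S [hS1 hS2]] := local_conf hz s1 s2.
have aS : Acc Rel S := acc_steps (hA _ s1) hS1.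
have [T [hT tT]] := exists_nf aS.
have e1 : Q1 = T.
  apply: (IH _ s1 (nz_steps hz (step_steps s1))); split => //.
  exact: steps_trans hS1 hT.
have e2 : Q2 = T.
  apply: (IH _ s2 (nz_steps hz (step_steps s2))); split => //.
  exact: steps_trans hS2 hT.
by rewrite e1 e2.
Qed.


Definition cyc m c x := if x == m then m + c else if (m < x) && (x <= m + c) then x.-1 else x.

Lemma cyc_m m c : cyc m c m = m + c.
Proof. by rewrite /cyc eqxx. Qed.
Lemma cyc_in m c x : m < x <= m + c -> cyc m c x = x.-1.
Proof. move=> h; rewrite /cyc; case: eqP => [e|_]; first lia. by rewrite h. Qed.
Lemma cyc_out m c x : x < m \/ m + c < x -> cyc m c x = x.
Proof. move=> h; rewrite /cyc; case: eqP => [e|_]; first lia. case: ifP => //; lia. Qed.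

Lemma dem_rev_iota c m : demazure (rev (iota m c)) = cyc m c.
Proof.
elim: c m => [|c IH] m.
  apply: functional_extensionality => x.
  have [e|e] := eqVneq x m; first by subst x; rewrite cyc_m addn0.
  by rewrite cyc_out //; lia.
rewrite /= rev_cons /demazure foldl_rcons -/(demazure _) IH.
have hacc : cyc m.+1 c m < cyc m.+1 c m.+1.
  by rewrite cyc_m cyc_out; lia.
rewrite /dem_step hacc; apply: functional_extensionality => x.
have [e|e] := eqVneq x m.
  by subst x; rewrite swap_at_a cyc_m cyc_m; lia.
have [e1|e1] := eqVneq x m.+1.
  by subst x; rewrite swap_at_a1 cyc_out ?cyc_in //; lia.
rewrite swap_at_other //.
have [h0|h0] := ltnP x m; first by rewrite !cyc_out //; lia.
have [h|h] := leqP x (m + c.+1).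
  have h' : m.+1 < x by lia.
  rewrite !cyc_in //; lia.
rewrite !cyc_out //; lia.
Qed.

Definition shift (v : nat -> nat) x := if x is x'.+1 then (v x').+1 else 0.

Lemma swap_at_S a x : swap_at a.+1 x.+1 = (swap_at a x).+1.
Proof. rewrite /swap_at eqSS; case: (x == a) => //; rewrite eqSS; by case: (x == a.+1). Qed.

Lemma shift_fold C t v : (forall x y, 2 <= x -> x < y -> C x < C y) ->
  v 0 = 0 -> injective v -> all (fun a => 1 <= a) t ->
  foldl dem_step (fun x => C (shift v x)) (map S t) = (fun x => C (shift (foldl dem_step v t) x)).
Proof.
move=> hC; elim: t v => //= a t IH v hv0 hvi /andP[ha hat].
have hva : 1 <= v a.
  rewrite lt0n; apply/eqP => e; have := hvi a 0; rewrite e hv0 => h; have := h erefl; lia.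
have hva1 : 1 <= v a.+1.
  rewrite lt0n; apply/eqP => e; have := hvi a.+1 0; rewrite e hv0 => h; have := h erefl; lia.
have E : dem_step (fun x => C (shift v x)) a.+1 = (fun x => C (shift (dem_step v a) x)).
  rewrite /dem_step /=.
  have [hlt|hge] := ltnP (v a) (v a.+1).
    have -> : C (v a).+1 < C (v a.+1).+1 by apply: hC; lia.
    apply: functional_extensionality => x; case: x => [|x] /=.
      by rewrite /swap_at.
    by rewrite swap_at_S.
  have hne : v a.+1 != v a by rewrite (inj_eq hvi); apply/eqP; lia.
  have -> : C (v a).+1 < C (v a.+1).+1 = false.
    apply/negbTE; rewrite -leqNgt ltnW //; apply: hC; lia.
  by [].
rewrite E; apply: IH => //.
- rewrite /dem_step; case: ifP => _ //; rewrite swap_at_other //; apply/eqP; lia.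
- exact: dem_step_inj.
Qed.

Definition PF (f : nat -> nat) N :=
  [/\ f 0 = 0, (forall x, N < x -> f x = x), injective f &
      (forall y, 1 <= y -> exists x, f x = y)].

Definition rowcond (f : nat -> nat) i := exists j, i < j /\ f j < f i.

Lemma cyc1_mono c x y : 2 <= x -> x < y -> cyc 1 c x < cyc 1 c y.
Proof.
move=> hx hxy.
have [h1|h1] := leqP x (1 + c); have [h2|h2] := leqP y (1 + c).
- rewrite !cyc_in //; lia.
- rewrite cyc_in ?(cyc_out (x := y)) //; lia.
- lia.
- rewrite !cyc_out //; lia.
Qed.

Lemma cyc1_mono_iff c x y : 2 <= x -> 2 <= y -> (cyc 1 c x < cyc 1 c y) = (x < y).
Proof.
move=> hx hy; case: (ltnP x y) => h; first exact: cyc1_mono.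
apply/negbTE; rewrite -leqNgt; have [e|e] := eqVneq y x; first by subst.
apply: ltnW; apply: cyc1_mono => //; lia.
Qed.

Definition cinv c y := if y == c.+1 then 1 else if (1 <= y) && (y <= c) then y.+1 else y.

Lemma cyc_cinv c y : cyc 1 c (cinv c y) = y.
Proof.
rewrite /cinv; case: eqP => [->|h]; first by rewrite cyc_m add1n.
case: ifP => h'; first by rewrite cyc_in //; lia.
have [e|e] := eqVneq y 1; first by subst y; lia.
by rewrite cyc_out //; lia.
Qed.

Lemma cinv_cyc c y : cinv c (cyc 1 c y) = y.
Proof.
have [e|e] := eqVneq y 1.
  by subst y; rewrite cyc_m /cinv add1n eqxx.
have [h|h] := leqP y (1 + c).
  case: y e h => [|y] e h; first by rewrite cyc_out //; lia.
  rewrite cyc_in; last lia.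
  rewrite /cinv /=; case: eqP => [|_]; first lia.
  case: ifP => //; lia.
rewrite cyc_out; last lia.
rewrite /cinv; case: eqP => [|_]; first lia.
case: ifP => //; lia.
Qed.

Lemma cinv_pos c y : 1 <= y -> 1 <= cinv c y.
Proof. rewrite /cinv; case: eqP => // _; case: ifP => //. Qed.

Lemma cyc_pos c y : 1 <= y -> 1 <= cyc 1 c y.
Proof.
move=> hy; have [e|e] := eqVneq y 1; first by subst y; rewrite cyc_m.
have [h|h] := leqP y (1 + c); first by rewrite cyc_in //; lia.
by rewrite cyc_out //; lia.
Qed.

Definition lehP c (Pg : pipedream) : pipedream :=
  fun i j => if i == 1 then (1 <= j) && (j <= c) else if i is i'.+1 then Pg i' j else false.

Lemma lehP_rword c Pg N : c <= N.+1 -> pd_bounded Pg N ->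
  rword (lehP c Pg) N.+1 = rev (iota 1 c) ++ map S (rword Pg N).
Proof.
move=> hc hb; rewrite !rwordE /= -/(iota 2 N).
congr cat.
  rewrite rowl_letters // filter_rev.
  have -> : N.+1 = c + (N.+1 - c) by lia.
  rewrite iotaD filter_cat.
  rewrite (_ : filter _ (iota (1 + c) _) = [::]); last first.
    apply: filter_nil_in => a; rewrite mem_iota /lehP /= => h; apply/negP; lia.
  rewrite cats0; congr rev; apply/all_filterP; apply/allP => a.
  rewrite mem_iota /lehP /= => h; lia.
rewrite map_flatten -map_comp (_ : iota 2 N = map S (iota 1 N)); last first.
  by rewrite -(iotaDl 1).
rewrite -map_comp; congr flatten; apply/eq_in_map => i; rewrite mem_iota => /andP[hi _] /=.
have E : lehP c Pg i.+1 =1 Pg i.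
  move=> j; rewrite /lehP; case: i hi => //.
rewrite -(rowl_mono (M := N.+1) i hb) // /rowl -map_comp (eq_filter E).
apply: eq_map => j /=; lia.
Qed.

Lemma rword_pos P N : pd_bounded P N -> all (fun a => 1 <= a) (rword P N).
Proof.
move=> hb; apply/allP => a; rewrite rwordE => /flatten_mapP [i]; rewrite mem_iota.
move=> /andP[hi _] /rowl_ge; lia.
Qed.

Lemma PF_pos f N x : PF f N -> 1 <= x -> 1 <= f x.
Proof.
move=> [h0 _ hi _] hx; rewrite lt0n; apply/eqP => e.
have := hi x 0; rewrite e h0 => h; have := h erefl; lia.
Qed.

Lemma lehmer N : forall f, PF f N -> exists P, [/\ pd_bounded P N,
  demazure (rword P N) = f & forall i, 1 <= i -> ((exists j, P i j) <-> rowcond f i)].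
Proof.
elim: N => [|N IH] f hf.
  have [h0 hfix hinj hsurj] := hf.
  have ef : f = id.
    apply: functional_extensionality => x; case: x => // x; exact: hfix.
  subst f; exists (fun _ _ => false); split => //.
  move=> i hi; split; first by case.
  by move=> [j [hj hj']]; rewrite /= in hj'; lia.
have [h0 hfix hinj hsurj] := hf.
have hf1 : 1 <= f 1 := PF_pos hf (isT : 1 <= 1).
have hf1N : f 1 <= N.+1.
  rewrite leqNgt; apply/negP => h; have := hfix _ h; move/hinj; lia.
set c := (f 1).-1.
have hc1 : f 1 = c.+1 by rewrite /c prednK.
set g := fun x => (cinv c (f x.+1)).-1.
have hfg : forall x, f x.+1 = cyc 1 c (g x).+1.
  move=> x; rewrite /g prednK ?cyc_cinv //; apply: cinv_pos; exact: (PF_pos hf).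
have hg : PF g N.
  split.
  - by rewrite /g hc1 /cinv eqxx.
  - move=> x hx; rewrite /g hfix; last lia.
    rewrite /cinv; case: eqP; first lia.
    by case: ifP => //; lia.
  - move=> x y e; apply/succn_inj/hinj; by rewrite !hfg e.
  - move=> y hy; have [x0 hx0] := hsurj (cyc 1 c y.+1) (cyc_pos c (ltn0Sn y)).
    case: x0 hx0 => [|x0] hx0; first by rewrite h0 in hx0; have := cyc_pos c (ltn0Sn y); lia.
    exists x0; by rewrite /g hx0 cinv_cyc.
have [Pg [hbg hdg hrg]] := IH g hg.
exists (lehP c Pg); split.
- move=> i j; rewrite /lehP; case: eqP => [->|hi]; first by move=> /andP[] *; split; lia.
  case: i hi => // i hi /hbg [] *; split; lia.
- rewrite lehP_rword //; last lia.
  rewrite /demazure foldl_cat -/(demazure _) dem_rev_iota.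
  have -> : cyc 1 c = (fun x => cyc 1 c (shift id x)).
    by apply: functional_extensionality => -[|x].
  rewrite shift_fold //; last exact: rword_pos hbg.
  + rewrite -/(demazure _) hdg; apply: functional_extensionality => -[|x] /=.
      by rewrite h0 cyc_out //; left.
    by rewrite hfg.
  + exact: cyc1_mono.
- move=> i hi; case: (eqVneq i 1) => [->|hi1].
    rewrite /lehP /=; split.
      move=> [j /andP[hj1 hjc]].
      have [x hx] := hsurj 1 isT.
      exists x; split; last by rewrite hx hc1; lia.
      case: x hx => [|[|x]] hx; [by rewrite h0 in hx| |lia].
      by rewrite hx in hc1; lia.
    move=> [j [hj hfj]]; exists 1; rewrite leqnn /=.
    have := PF_pos hf (_ : 1 <= j); lia.
  case: i hi hi1 => [//|i] hi hi1.
  have hi' : 1 <= i by lia.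
  have -> : (exists j, lehP c Pg i.+1 j) <-> exists j, Pg i j.
    rewrite /lehP; have -> : (i.+1 == 1) = false by apply/negbTE.
    by [].
  rewrite hrg //; split.
    move=> [j [hj hgj]]; exists j.+1; split => //.
    rewrite !hfg cyc1_mono_iff ?ltnS //; apply: (PF_pos hg); lia.
  move=> [j [hj hfj]]; case: j hj hfj => [//|j] hj hfj; exists j; split => //.
  move: hfj; rewrite !hfg cyc1_mono_iff ?ltnS //; apply: (PF_pos hg); lia.
Qed.


Lemma PF_permn n (w : 'S_n) : PF (permn w) n.
Proof.
split => //.
- exact: permn_fix.
- exact: permn_inj.
- move=> y hy; have [x [_ hx]] := permn_surj w hy; by exists x.
Qed.

Lemma PD_box n (w : 'S_n) P : in_PD w P -> exists K, box K P.
Proof. move=> [N [hb _]]; exists (N + N) => i j /hb [] *; split; lia. Qed.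

Lemma PD_NZ n (w : 'S_n) P : in_PD w P -> NZ P.
Proof. move=> [N [hb _]] i; apply/negP => /hb [] *; lia. Qed.

Lemma PD_acc n (w : 'S_n) P : in_PD w P -> Acc Rel P.
Proof. move=> /PD_box [K hK]; exact: acc_box hK. Qed.

Lemma steps_PD n (w : 'S_n) P Q : in_PD w P -> dst_steps P Q -> in_PD w Q.
Proof.
move=> hP h; elim: h hP => // P0 Q0 R0 [r [hr [hc ->]]] _ IH hP.
apply: IH; exact: step_PD.
Qed.

Lemma find_gap (p : nat -> Prop) a d : ~ p a -> p (a + d) ->
  exists r, [/\ a <= r, ~ p r & p r.+1].
Proof.
elim: d a => [|d IH] a ha hd; first by rewrite addn0 in hd.
case: (classic (p a.+1)) => h; first by exists a; split.
have hd' : p (a.+1 + d) by rewrite addSnnS.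
have [r [h1 h2 h3]] := IH a.+1 h hd'.
exists r; split => //; lia.
Qed.

Lemma allPD_terminal n (w : 'S_n) P :
  (forall i, permn (w^-1)%g 1 <= i -> i <= n.-1 -> permn w i < permn w i.+1) ->
  in_PD w P -> dst_terminal P.
Proof.
move=> hc hP r hr cr.
have hQ := step_PD hP hr cr.
have [[j0 hj0] h1 _] := cr.
have [N [hb _]] := hP.
have [_ hj0' _ _] := hb _ _ hj0.
have hj02 : 2 <= j0.
  case: (ltnP j0 2) => // h; have E : j0 = 1 by lia.
  by rewrite E in hj0; rewrite hj0 in h1.
have hex : exists j, dst_move P r r.+1 j.
  by exists j0.-1; rewrite move_r1 prednK ?hj0 ?orbT //; lia.
have [i [hi1 hi2 hi3]] := gap hQ hr (fun j => negbT (move_r P r j)) hex.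
have := hc i hi1 hi2; lia.
Qed.

Lemma not_inj n (w : 'S_n) i0 :
  permn (w^-1)%g 1 <= i0 -> i0 <= n.-1 -> ~~ (permn w i0 < permn w i0.+1) ->
  exists P1 P2 Q, [/\ in_PD w P1, in_PD w P2, is_dst P1 Q, is_dst P2 Q & P1 <> P2].
Proof.
move=> hk hi0 hnot.
set k := permn (w^-1)%g 1 in hk.
have hk1 : 1 <= k by apply: permn_pos.
have hwk : permn w k = 1 by rewrite /k; have := @permnK _ (w^-1)%g 1 isT; rewrite invgK.
have [L [hbL hdL hrL]] := lehmer (PF_permn w).
have hPL : in_PD w L by exists n; split => // x _; rewrite hdL.
have hemp : ~ (exists j, L k j).
  rewrite hrL // => -[j [hj hwj]]; rewrite hwk in hwj.
  have := @permn_pos _ w j; lia.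
have hne : exists j, L i0 j.
  rewrite hrL; last lia.
  exists i0.+1; split => //.
  have hneq : permn w i0.+1 != permn w i0 by rewrite (inj_eq (@permn_inj _ w)); apply/eqP; lia.
  lia.
have hne' : exists j, L (k + (i0 - k)) j by rewrite subnKC.
have [r [hr1 hr2 hr3]] := @find_gap (fun r => exists j, L r j) k (i0 - k) hemp hne'.
have hr : 1 <= r by lia.
have hrow : forall j, ~~ L r j by move=> j; apply/negP => h; apply: hr2; exists j.
have hub : forall j, L r.+1 j -> j <= n by move=> j /hbL [].
have [c hc hcmax] := ex_maxnP hr3 hub.
have [_ hc1 hrn hcn] := hbL _ _ hc.
set P2 : pipedream := fun i j => if i == r then j == c.+1
  else if i == r.+1 then L i j && (j != c) else L i j.
have hcond : dst_cond P2 r.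
  split.
  - by exists c.+1; rewrite /P2 eqxx.
  - rewrite /P2 eqxx; apply/eqP; lia.
  - move=> j j'; rewrite /P2 eqxx => /eqP -> ; rewrite ifN_eq; last lia.
    rewrite eqxx => /andP[/hcmax h _]; lia.
have hmove : dst_move P2 r = L.
  apply: functional_extensionality => i; apply: functional_extensionality => j.
  have [->|h1] := eqVneq i r; first by rewrite move_r (negbTE (hrow j)).
  have [->|h2] := eqVneq i r.+1.
    rewrite move_r1 /P2 eqxx ifN_eq; last lia.
    rewrite eqxx eqSS.
    case: (eqVneq j c) => [->|hjc]; first by rewrite hc andbF.
    by rewrite andbT orbF.
  by rewrite move_other // /P2 (negbTE h1) (negbTE h2).
have hbP2 : pd_bounded P2 n.+1.
  move=> i j; rewrite /P2; case: (eqVneq i r) => [e|_].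
    subst i; move=> /eqP ->; split; lia.
  case: (eqVneq i r.+1) => [e|_]; first by move=> /andP[/hbL [] *]; split; lia.
  move=> /hbL [] *; split; lia.
have hP2 : in_PD w P2 by apply: (step_PD_back hbP2 hr hcond); rewrite hmove.
have [Q [hQ tQ]] := exists_nf (PD_acc hPL).
exists L, P2, Q; split => //.
- split => //; apply: (dst_trans (Q := L)) => //.
  by exists r; split => //; split => //; rewrite hmove.
- move=> e; have h2 : P2 r c.+1 by rewrite /P2 eqxx.
  by move: (hrow c.+1); rewrite e h2.
Qed.

Unset Implicit Arguments.

Theorem mainTheorem2 (n : nat) (w : 'S_n) :
  (forall P, in_PD w P ->
     Acc (fun Q R => dst_step R Q) P /\
     (exists Q, is_dst P Q) /\
     (forall Q1 Q2, is_dst P Q1 -> is_dst P Q2 -> Q1 = Q2)) /\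
  (forall P Q, in_PD w P -> is_dst P Q -> in_QPD w Q) /\
  (forall P, in_PD w P -> (is_dst P P <-> in_QPD w P)) /\
  (forall Q, in_QPD w Q -> exists2 P, in_PD w P & is_dst P Q) /\
  ((forall P1 P2 Q, in_PD w P1 -> in_PD w P2 -> is_dst P1 Q -> is_dst P2 Q ->
                    P1 = P2) <->
   (forall i, permn (w^-1)%g 1 <= i -> i <= n.-1 -> permn w i < permn w i.+1)).
Proof.
split.
  move=> P hP; split; first exact: (PD_acc hP).
  split; first exact: exists_nf (PD_acc hP).
  exact: unique_nf (PD_acc hP) (PD_NZ hP).
split.
  move=> P Q hP [hs ht]; have hQ := steps_PD hP hs; split => //.
  have [N [hb _]] := hQ; exact: term_qy hb ht.
split.
  move=> P hP; split.
    move=> [_ ht]; split => //; have [N [hb _]] := hP; exact: term_qy hb ht.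
  move=> [_ hq]; split; first exact: dst_refl.
  have [N [hb _]] := hP; exact: qy_term hb hq.
split.
  move=> Q hQ; exists Q; first by case: hQ.
  split; first exact: dst_refl.
  case: hQ => [[N [hb _]] hq]; exact: qy_term hb hq.
split.
  move=> hinj i hi1 hi2; apply: NNPP => hn.
  have [P1 [P2 [Q [h1 h2 h3 h4 hne]]]] := not_inj hi1 hi2 (introN idP hn).
  by apply: hne; apply: hinj h1 h2 h3 h4.
move=> hc P1 P2 Q h1 h2 [s1 t1] [s2 t2].
have e1 : P1 = Q.
  case: (steps_cases s1) => // -[P' [hs _]].
  by case: (term_nostep (allPD_terminal hc h1) hs).
have e2 : P2 = Q.
  case: (steps_cases s2) => // -[P' [hs _]].
  by case: (term_nostep (allPD_terminal hc h2) hs).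
by rewrite e1 e2.
Qed.
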